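(* Let $\psi$ be a strictly convex differentiable real function and let $d_{\zeta^+}$ be the associated divergence restricted to nonzero eigenvalues (defined in the context). Then for every $A\in\mathbb{R}^{q\times p}$, $$d_{\zeta^+}(AA^\top\,\|\,I_q)=d_{\zeta^+}(A^\top A\,\|\,I_p).$$
   Context: For a strictly convex differentiable $\psi$, let $\mathrm{div}_\psi(x\|y)=\psi(x)-\psi(y)-(x-y)\psi'(y)$. For symmetric matrices $X,Y$ of the same size $m\times m$, let $\lambda_1(X)\ge\dots\ge\lambda_m(X)$ with orthonormal eigenvectors $u_1,\dots,u_m$, and $\lambda_1(Y)\ge\dots\ge\lambda_m(Y)$ with orthonormal eigenvectors $v_1,\dots,v_m$. Define $$d_{\zeta^+}(X\|Y):=\sum_{i:\lambda_i(X)\ne0}\ \sum_{j:\lambda_j(Y)\neq0}(u_i^\top v_j)^2\,\mathrm{div}_\psi\big(\lambda_i(X)\,\|\,\lambda_j(Y)\big).$$ (This is the spectral Bregman divergence induced by $\zeta(X)=\sum_i\psi(\lambda_i(X))$, restricted to nonzero eigenvalues.) *)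

(* Defs.v *)
From HB Require Import structures.
From mathcomp Require Import all_boot all_order all_algebra.
From mathcomp Require Import all_classical all_reals all_analysis.
Set Implicit Arguments. Unset Strict Implicit. Unset Printing Implicit Defensive.
Import Order.TTheory GRing.Theory Num.Theory.
Local Open Scope ring_scope.

Section Defs.
Variable R : realType.

Definition strictly_convex (psi : R -> R) : Prop :=
  forall x y t : R, x != y -> 0 < t -> t < 1 ->
    psi (t * x + (1 - t) * y) < t * psi x + (1 - t) * psi y.

Definition differentiable_everywhere (psi : R -> R) : Prop :=
  forall x : R, derivable psi x 1.

Definition div_psi (psi : R -> R) (x y : R) : R :=
  psi x - psi y - (x - y) * derive1 psi y.

Definition spectral_decomp (m : nat) (X : 'M[R]_m) (U : 'M[R]_m)
    (lam : 'I_m -> R) : Prop :=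
  [/\ U^T *m U = 1%:M,
      forall i : 'I_m, X *m col i U = lam i *: col i U
    & forall i j : 'I_m, (i <= j)%N -> lam j <= lam i].

(* d_{zeta^+}(X||Y) computed from spectral decompositions (U,lam) of X and
   (V,mu) of Y; note (U^T V)_{ij} = u_i^T v_j. *)
Definition dzeta_plus (psi : R -> R) (m : nat) (U : 'M[R]_m) (lam : 'I_m -> R)
    (V : 'M[R]_m) (mu : 'I_m -> R) : R :=
  \sum_(i < m | lam i != 0) \sum_(j < m | mu j != 0)
     ((U^T *m V) i j) ^+ 2 * div_psi psi (lam i) (mu j).

End Defs.

(* Main.v *)
Require Import Defs.
From HB Require Import structures.
From mathcomp Require Import all_boot all_order all_algebra.
From mathcomp Require Import all_classical all_reals all_analysis.
Import Order.TTheory GRing.Theory Num.Theory.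
Local Open Scope ring_scope.

Lemma sylv (S : comNzRingType) (q p : nat) (x : S) (A : 'M[S]_(q, p)) (B : 'M[S]_(p, q)) :
  x ^+ p * \det (x%:M - A *m B) = x ^+ q * \det (x%:M - B *m A).
Proof.
pose L := block_mx (x%:M : 'M[S]_q) A B (1%:M : 'M[S]_p).
pose E1 := block_mx (1%:M : 'M[S]_q) (- A) 0 (1%:M : 'M[S]_p).
pose E2 := block_mx (1%:M : 'M[S]_q) (0 : 'M[S]_(q, p)) (- B) (x%:M : 'M[S]_p).
have h1 : E1 *m L = block_mx (x%:M - A *m B) 0 B 1%:M.
  rewrite /E1 /L mulmx_block !mul1mx !mul0mx !add0r mulmx1 mulNmx.
  by rewrite addrN addrC.
have h2 : E2 *m L = block_mx x%:M A 0 (x%:M - B *m A).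
  rewrite /E2 /L mulmx_block !mul1mx !mul0mx !addr0 mulmx1 !mulNmx.
  by rewrite mul_mx_scalar mul_scalar_mx addNr addrC.
have d1 : \det (E1 *m L) = \det (x%:M - A *m B).
  by rewrite h1 det_lblock det1 mulr1.
have dE1 : \det E1 = 1 by rewrite /E1 det_ublock !det1 mulr1.
have dE2 : \det E2 = x ^+ p by rewrite /E2 det_lblock det1 det_scalar mul1r.
have d2 : \det (E2 *m L) = x ^+ q * \det (x%:M - B *m A).
  by rewrite h2 det_ublock det_scalar.
rewrite -d2 det_mulmx dE2 -d1 det_mulmx dE1 mul1r.
by [].
Qed.

Lemma orth_r (R : realType) m (U : 'M[R]_m) : U^T *m U = 1%:M -> U *m U^T = 1%:M.
Proof. exact: mulmx1C. Qed.

Lemma char_spec (R : realType) m (X U : 'M[R]_m) (l : 'I_m -> R) :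
  spectral_decomp X U l ->
  \det ('X%:M - map_mx polyC X) = \prod_i ('X - (l i)%:P).
Proof.
case=> hU hX _.
have hU' := mulmx1C hU.
pose D := diag_mx (\row_i l i).
have hXU : X *m U = U *m D.
  apply/matrixP => a i.
  have := congr1 (fun M : 'M[R]_(m,1) => M a 0) (hX i).
  have -> : (X *m U) a i = (X *m col i U) a 0.
    by rewrite !mxE; apply: eq_bigr => k _; rewrite !mxE.
  rewrite /D mul_mx_diag !mxE => ->.
  by rewrite mulrC.
have hXe : X = U *m D *m U^T by rewrite -hXU -mulmxA hU' mulmx1.
pose U' := map_mx polyC U.
have hU'' : U' *m map_mx polyC U^T = 1%:M by rewrite /U' -map_mxM hU' map_mx1.
have e : 'X%:M - map_mx polyC X = U' *m ('X%:M - map_mx polyC D) *m map_mx polyC U^T.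
  rewrite hXe !map_mxM -/U' mulmxBr mulmxBl mul_mx_scalar.
  rewrite -scalemxAl hU'' scalemx1.
  by [].
rewrite e !det_mulmx mulrAC -det_mulmx hU'' det1 mul1r.
have -> : 'X%:M - map_mx polyC D = diag_mx (\row_i ('X - (l i)%:P)).
  apply/matrixP => a b; rewrite !mxE /D.
  by case: (a == b) => /=; rewrite ?mulr1n ?mulr0n ?subr0.
rewrite det_diag; apply: eq_bigr => i _; by rewrite mxE.
Qed.

Lemma eig_one (R : realType) m (V : 'M[R]_m) (mu : 'I_m -> R) :
  spectral_decomp 1%:M V mu -> forall j, mu j = 1.
Proof.
case=> hV hX _ j.
have hk : forall k, (1 - mu j) * V k j = 0.
  move=> k; have := congr1 (fun M : 'M[R]_(m,1) => M k 0) (hX j).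
  rewrite mul1mx !mxE.
  by move=> e; rewrite mulrBl mul1r -e subrr.
have := congr1 (fun M : 'M[R]_m => M j j) hV.
rewrite !mxE eqxx /= => h.
have : (1 - mu j) * 1 = 0.
  rewrite -[X in _ * X = _]h mulr_sumr big1 // => k _.
  by rewrite !mxE mulrA mulrC mulrA [_ * (1 - _)]mulrC hk mul0r.
by rewrite mulr1 => /eqP; rewrite subr_eq0 => /eqP <-.
Qed.

Lemma dz_simpl (R : realType) (psi : R -> R) m (X U V : 'M[R]_m) (l mu : 'I_m -> R) :
  spectral_decomp X U l -> spectral_decomp 1%:M V mu ->
  dzeta_plus psi U l V mu = \sum_(i | l i != 0) div_psi psi (l i) 1.
Proof.
move=> [hU _ _] hV.
have h1 := @eig_one _ _ _ _ hV.
case: hV => hV _ _.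
have hV' := mulmx1C hV.
apply: eq_bigr => i _.
transitivity (\sum_j ((U^T *m V) i j) ^+ 2 * div_psi psi (l i) 1).
  rewrite (eq_bigl xpredT); last by move=> j; rewrite h1 oner_neq0.
  by apply: eq_bigr => j _; rewrite h1.
rewrite -mulr_suml.
have -> : \sum_j ((U^T *m V) i j) ^+ 2 = ((U^T *m V) *m (U^T *m V)^T) i i.
  rewrite [in RHS]mxE; apply: eq_bigr => j _; by rewrite expr2 [in X in _ = _ * X]mxE.
by rewrite trmx_mul trmxK mulmxA -(mulmxA _ V) hV' mulmx1 hU mxE eqxx mul1r.
Qed.

Lemma iterX (R : realType) n : iter n (GRing.mul ('X - (0 : R)%:P)) 1 = 'X^n.
Proof. elim: n => [|n IH] //=; by rewrite IH subr0 exprS. Qed.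

Lemma sum_seq (R : realType) (f : R -> R) p q (l : 'I_q -> R) :
  \sum_(x <- nseq p 0 ++ map l (index_enum 'I_q) | x != 0) f x
  = \sum_(i | l i != 0) f (l i).
Proof. by rewrite big_cat big_nseq_cond eqxx /= add0r big_map. Qed.

Theorem lemmaE2 (R : realType) (psi : R -> R)
    (hconv : strictly_convex psi) (hdiff : differentiable_everywhere psi)
    (q p : nat) (A : 'M[R]_(q, p))
    (U1 V1 : 'M[R]_q) (l1 m1 : 'I_q -> R)
    (U2 V2 : 'M[R]_p) (l2 m2 : 'I_p -> R) :
  spectral_decomp (A *m A^T) U1 l1 ->
  spectral_decomp (1%:M : 'M[R]_q) V1 m1 ->
  spectral_decomp (A^T *m A) U2 l2 ->
  spectral_decomp (1%:M : 'M[R]_p) V2 m2 ->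
  dzeta_plus psi U1 l1 V1 m1 = dzeta_plus psi U2 l2 V2 m2.
Proof.
move=> h1 h2 h3 h4.
rewrite (@dz_simpl _ psi _ _ _ _ _ _ h1 h2) (@dz_simpl _ psi _ _ _ _ _ _ h3 h4).
have hp : \prod_(x <- nseq p 0 ++ map l1 (index_enum 'I_q)) ('X - x%:P)
        = \prod_(x <- nseq q 0 ++ map l2 (index_enum 'I_p)) ('X - x%:P).
  rewrite !big_cat !big_map /= !big_nseq !iterX.
  rewrite -(@char_spec _ _ _ _ _ h1) -(@char_spec _ _ _ _ _ h3) !map_mxM.
  exact: sylv.
rewrite -(@sum_seq _ (fun x => div_psi psi x 1) p q l1) -(@sum_seq _ (fun x => div_psi psi x 1) q p l2).
exact: perm_big (prod_XsubC_eq hp).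
Qed.
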